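(* Let $k$ be an algebraically closed field, $A$ a finite dimensional $k$-algebra, $P_0,P_1\in\operatorname{proj}A$, and let $G=\operatorname{Aut}_A(P_0)\times\operatorname{Aut}_A(P_1)$ act on $\operatorname{Hom}_A(P_1,P_0)$ by $(a,b)f=afb^{-1}$. If $f,g\in\operatorname{Hom}_A(P_1,P_0)$ and $g$ lies in the Zariski closure of $Gf$, then $\mathcal{T}_f\subseteq\mathcal{T}_g$, $\mathcal{F}_f\subseteq\mathcal{F}_g$, $\overline{\mathcal{T}}_f\supseteq\overline{\mathcal{T}}_g$, $\overline{\mathcal{F}}_f\supseteq\overline{\mathcal{F}}_g$ and $\mathcal{W}_f\supseteq\mathcal{W}_g$.
   Context: For a morphism $f\colon P_1\to P_0$ in $\operatorname{proj}A$, let $\nu=D\operatorname{Hom}_A(-,A)$, $C_f=\operatorname{Cok}f$, $K_{\nu f}=\operatorname{Ker}\nu f$. $\mathcal{T}_f$ is the smallest torsion class of $\operatorname{mod}A$ containing $C_f$; $\overline{\mathcal{T}}_f=\{X\mid\operatorname{Hom}_A(X,K_{\nu f})=0\}$; $\mathcal{F}_f$ is the smallest torsion-free class containing $K_{\nu f}$; $\overline{\mathcal{F}}_f=\{X\mid\operatorname{Hom}_A(C_f,X)=0\}$; $\mathcal{W}_f=\overline{\mathcal{T}}_f\cap\overline{\mathcal{F}}_f$. *)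

(* Defs.v *)
From HB Require Import structures.
From mathcomp Require Import all_boot all_order all_algebra all_field.
From mathcomp Require Import mpoly.

Set Implicit Arguments.
Unset Strict Implicit.
Unset Printing Implicit Defensive.

Import GRing.Theory.
Local Open Scope ring_scope.

Section ModDefs.
Variables (k : fieldType) (A : falgType k).

Record fmod := FMod {
  fcar :> vectType k;
  fact : fcar -> A -> fcar;
  fact_linl : forall a c x y, fact (c *: x + y) a = c *: fact x a + fact y a;
  fact_linr : forall x c a b, fact x (c *: a + b) = c *: fact x a + fact x b;
  fact1 : forall x, fact x 1 = x;
  factM : forall x a b, fact x (a * b) = fact (fact x a) b }.

Definition is_hom (X Y : fmod) (h : X -> Y) : Prop :=
  (forall c x y, h (c *: x + y) = c *: h x + h y) /\
  (forall x a, h (fact x a) = fact (h x) a).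

Definition surj (X Y : Type) (h : X -> Y) : Prop := forall y, exists x, h x = y.

Definition hom_zero (X Y : fmod) : Prop :=
  forall h : X -> Y, is_hom h -> forall x, h x = 0.

Definition short_exact (X Y Z : fmod) (i : X -> Y) (p : Y -> Z) : Prop :=
  [/\ is_hom i, is_hom p, injective i, surj p &
      forall y, p y = 0 <-> exists x, i x = y].

Definition ext_closed (T : fmod -> Prop) : Prop :=
  forall (X Y Z : fmod) (i : X -> Y) (p : Y -> Z),
    short_exact i p -> T X -> T Z -> T Y.

Definition torsion_class (T : fmod -> Prop) : Prop :=
  (forall (X Y : fmod) (h : X -> Y), T X -> is_hom h -> surj h -> T Y) /\
  ext_closed T.

Definition torsionfree_class (F : fmod -> Prop) : Prop :=
  (forall (X Y : fmod) (h : Y -> X), F X -> is_hom h -> injective h -> F Y) /\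
  ext_closed F.

Definition projective (P : fmod) : Prop :=
  forall (X Y : fmod) (p : X -> Y) (h : P -> Y),
    is_hom p -> surj p -> is_hom h ->
    exists h' : P -> X, is_hom h' /\ forall x, p (h' x) = h x.

Definition is_aut (P : fmod) (a a' : P -> P) : Prop :=
  [/\ is_hom a, is_hom a', cancel a a' & cancel a' a].

Definition aut_orbit (P0 P1 : fmod) (f : P1 -> P0) (h : P1 -> P0) : Prop :=
  exists (a a' : P0 -> P0) (b b' : P1 -> P1),
    [/\ is_aut a a', is_aut b b' & forall x, h x = a (f (b' x))].

Definition hom_mx (X Y : fmod) (h : X -> Y) :
    'M[k]_(\dim {:X}, \dim {:Y}) :=
  \matrix_(i, j) coord (vbasis {:Y}) j (h (tnth (vbasis {:X}) i)).

Definition hom_coords (X Y : fmod) (h : X -> Y) :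
    'I_(\dim {:X} * \dim {:Y}) -> k :=
  fun i => mxvec (hom_mx h) 0 i.

Definition zariski_closure (X Y : fmod) (S : (X -> Y) -> Prop) (g : X -> Y) : Prop :=
  forall p : {mpoly k[\dim {:X} * \dim {:Y}]},
    (forall h, S h -> p.@[hom_coords h] = 0) -> p.@[hom_coords g] = 0.

Definition is_cok (P0 P1 : fmod) (f : P1 -> P0) (C : fmod) : Prop :=
  exists pi : P0 -> C,
    [/\ is_hom pi, surj pi & forall y, pi y = 0 <-> exists x, f x = y].

Definition homA (P : fmod) (phi : P -> A) : Prop :=
  (forall c x y, phi (c *: x + y) = c *: phi x + phi y) /\
  (forall x a, phi (fact x a) = phi x * a).

(* N together with pair is (isomorphic to) nu P = D Hom_A(P, A):
   n |-> pair n - is an isomorphism of right A-modules from N onto the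
   k-dual of the left A-module Hom_A(P,A), where (a.phi)(x) = a * phi x
   and (xi.a)(phi) = xi(a.phi). *)
Definition nakayama_dual (P N : fmod) (pair : N -> (P -> A) -> k) : Prop :=
  [/\ (forall c n m phi, homA phi -> pair (c *: n + m) phi = c * pair n phi + pair m phi),
      (forall n c phi psi, homA phi -> homA psi ->
          pair n (fun x => c *: phi x + psi x) = c * pair n phi + pair n psi),
      (forall n a phi, homA phi -> pair (fact n a) phi = pair n (fun x => a * phi x)),
      (forall n, (forall phi, homA phi -> pair n phi = 0) -> n = 0) &
      (forall xi : (P -> A) -> k,
          (forall c phi psi, homA phi -> homA psi ->
             xi (fun x => c *: phi x + psi x) = c * xi phi + xi psi) ->
          exists n, forall phi, homA phi -> pair n phi = xi phi)].

(* K is (isomorphic to) Ker (nu f), where nu f : nu P1 -> nu P0 = D Hom_A(P0,A)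
   is D Hom_A(f, A), i.e. (nu f)(n) = (phi |-> pair n (phi o f)). *)
Definition is_Knu (P0 P1 : fmod) (f : P1 -> P0) (K : fmod) : Prop :=
  exists (N : fmod) (pair : N -> (P1 -> A) -> k) (iota : K -> N),
    [/\ nakayama_dual pair, is_hom iota, injective iota &
        forall n, (exists x, iota x = n) <->
          (forall phi : P0 -> A, homA phi -> pair n (fun x => phi (f x)) = 0)].

Definition Tf (P0 P1 : fmod) (f : P1 -> P0) (X : fmod) : Prop :=
  forall T, torsion_class T -> (forall C, is_cok f C -> T C) -> T X.

Definition Ff (P0 P1 : fmod) (f : P1 -> P0) (X : fmod) : Prop :=
  forall F, torsionfree_class F -> (forall K, is_Knu f K -> F K) -> F X.

Definition Tbarf (P0 P1 : fmod) (f : P1 -> P0) (X : fmod) : Prop :=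
  forall K, is_Knu f K -> hom_zero X K.

Definition Fbarf (P0 P1 : fmod) (f : P1 -> P0) (X : fmod) : Prop :=
  forall C, is_cok f C -> hom_zero C X.

Definition Wf (P0 P1 : fmod) (f : P1 -> P0) (X : fmod) : Prop :=
  Tbarf f X /\ Fbarf f X.

End ModDefs.

(* Main.v *)
Require Import Defs.
From HB Require Import structures.
From mathcomp Require Import all_boot all_order all_algebra all_field.
From mathcomp Require Import mpoly.
From Stdlib Require Import ClassicalEpsilon Classical FunctionalExtensionality.
Set Implicit Arguments. Unset Strict Implicit. Unset Printing Implicit Defensive.
Import GRing.Theory.
Local Open Scope ring_scope.

Section Closure.
Variables (k : fieldType) (n d m : nat) (Mp : 'M[{mpoly k[n]}]_(d, m)).
Variables (T : Type) (S : T -> Prop) (cv : T -> 'I_n -> k) (g : T).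

Lemma closure_not_free :
  (forall h, S h -> ~~ row_free (map_mx (meval (cv h)) Mp)) ->
  (forall p : {mpoly k[n]}, (forall h, S h -> p.@[cv h] = 0) -> p.@[cv g] = 0) ->
  ~~ row_free (map_mx (meval (cv g)) Mp).
Proof.
move=> HS Hcl; apply/negP => Hfree.
set Mg := map_mx (meval (cv g)) Mp in Hfree.
have Hfull : row_full Mg^T by rewrite /row_full mxrank_tr; exact: Hfree.
set s := fullrankfun Hfull.
have Hu := fullrowsub_unit Hfull; rewrite -/s in Hu.
pose p := \det (rowsub s Mp^T).
have ev : forall v, p.@[v] = \det (rowsub s (map_mx (meval v) Mp)^T).
  move=> v; rewrite /p -det_map_mx; congr (\det _).
  by apply/matrixP => i j; rewrite !mxE.
have : p.@[cv g] = 0.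
  apply: Hcl => h /HS Hnf; rewrite ev; apply/eqP; rewrite -[_ == 0]negbK -unitfE.
  rewrite -unitmxE -row_free_unit; apply: contra Hnf => Hf.
  rewrite /row_free eqn_leq rank_leq_row /=.
  have := mxrankS (rowsub_sub s (map_mx (meval (cv h)) Mp)^T).
  by rewrite mxrank_tr; move: Hf; rewrite /row_free => /eqP ->.
rewrite ev; move/eqP; apply/negP; rewrite -unitfE -unitmxE; exact: Hu.
Qed.
End Closure.

Section L.
Variables (k : fieldType) (V W : vectType k) (f : V -> W)
  (Hf : forall c x y, f (c *: x + y) = c *: f x + f y).
Definition mkLin : {linear V -> W} := HB.pack f (GRing.isLinear.Build k V W *:%R f Hf).
Lemma mkLinE x : mkLin x = f x. Proof. by []. Qed.
Lemma mkLin_sum I r P (F : I -> V) : f (\sum_(i <- r | P i) F i) = \sum_(i <- r | P i) f (F i).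
Proof. exact: (linear_sum mkLin). Qed.
Definition mkHom : 'Hom(V, W) := linfun mkLin.
Lemma mkHomE x : mkHom x = f x. Proof. by rewrite lfunE. Qed.
End L.

Section PredVspace.
Variables (k : fieldType) (V : vectType k) (P : V -> Prop).
Hypothesis P0 : P 0.
Hypothesis PL : forall c x y, P x -> P y -> P (c *: x + y).

Lemma PZ c x : P x -> P (c *: x). Proof. by move=> Px; rewrite -[_ *: _]addr0; apply: PL. Qed.
Lemma PD x y : P x -> P y -> P (x + y). Proof. by move=> Px Py; rewrite -[x]scale1r; apply: PL. Qed.

Lemma pred_vspace_aux j : exists U : {vspace V}, (forall v, v \in U -> P v) /\
   (j <= \dim U \/ forall v, P v -> v \in U)%N.
Proof.
elim: j => [|j [U [HU [Hj|Hmax]]]].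
- by exists 0%VS; split => [v|]; [rewrite memv0 => /eqP -> | left].
- case: (classic (exists v, P v /\ v \notin U)) => [[v [Pv vU]]|Hn]; last first.
    exists U; split => //; right => v Pv; apply: NNPP => Hv.
    by apply: Hn; exists v; split => //; apply/negP.
  exists (U + <[v]>)%VS; split.
    move=> w /memv_addP [u Hu [w' /vlineP [c ->] ->]].
    by rewrite addrC; apply: PL => //; apply: HU.
  left; apply: leq_ltn_trans Hj _.
  rewrite (ltn_leqif (dimv_leqif_eq (addvSl U <[v]>))).
  apply: contra vU => /eqP ->; rewrite -[v in v \in _]add0r; exact: memv_add (mem0v _) (memv_line v).
- by exists U; split => //; right.
Qed.

Lemma pred_vspace : exists U : {vspace V}, forall v, v \in U <-> P v.
Proof.
have [U [HU [Hj|Hmax]]] := pred_vspace_aux (\dim {:V}).+1.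
  by have := dimvS (subvf U); rewrite leqNgt (leq_trans Hj) ?leqnn.
by exists U => v; split; [apply: HU | apply: Hmax].
Qed.

Definition pvs : {vspace V} := proj1_sig (constructive_indefinite_description _ pred_vspace).
Lemma pvsP v : v \in pvs <-> P v.
Proof. exact: (proj2_sig (constructive_indefinite_description _ pred_vspace)). Qed.
End PredVspace.

Section Mods.
Variables (k : fieldType) (A : falgType k).

Section Basic.
Variable X : fmod A.
Implicit Types (x y : X) (a : A).
Lemma mfact0 a : fact (0 : X) a = 0.
Proof.
have := fact_linl a (-1) (0 : X) 0.
by rewrite scaler0 addr0 scaleN1r addNr.
Qed.
Lemma mfactD x y a : fact (x + y) a = fact x a + fact y a.
Proof. by rewrite -[x]scale1r fact_linl !scale1r. Qed.
Lemma mfactZ c x a : fact (c *: x) a = c *: fact x a.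
Proof. by rewrite -[c *: x]addr0 fact_linl mfact0 addr0. Qed.
Lemma mfactN x a : fact (- x) a = - fact x a.
Proof. by rewrite -scaleN1r mfactZ scaleN1r. Qed.
Lemma mfactB x y a : fact (x - y) a = fact x a - fact y a.
Proof. by rewrite mfactD mfactN. Qed.
End Basic.

Section HomBasic.
Variables (X Y : fmod A) (h : X -> Y) (Hh : is_hom h).
Lemma hom_lin c x y : h (c *: x + y) = c *: h x + h y. Proof. exact: Hh.1. Qed.
Lemma hom_fact x a : h (fact x a) = fact (h x) a. Proof. exact: Hh.2. Qed.
Lemma hom0 : h 0 = 0.
Proof. by have := hom_lin (-1) 0 0; rewrite scaler0 addr0 scaleN1r addNr. Qed.
Lemma homD x y : h (x + y) = h x + h y. Proof. by rewrite -[x]scale1r hom_lin !scale1r. Qed.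
Lemma homZ c x : h (c *: x) = c *: h x. Proof. by rewrite -[c *: x]addr0 hom_lin hom0 addr0. Qed.
Lemma homN x : h (- x) = - h x. Proof. by rewrite -scaleN1r homZ scaleN1r. Qed.
Lemma homB x y : h (x - y) = h x - h y. Proof. by rewrite homD homN. Qed.
End HomBasic.

Lemma hom_comp (X Y Z : fmod A) (h : X -> Y) (h' : Y -> Z) :
  is_hom h -> is_hom h' -> is_hom (fun x => h' (h x)).
Proof.
move=> Hh Hh'; split => [c x y|x a]; first by rewrite !hom_lin.
by rewrite !hom_fact.
Qed.

Section Sub.
Variables (X : fmod A) (U : {vspace X}).
Hypothesis HU : forall x a, x \in U -> fact x a \in U.
Definition sact (u : subvs_of U) (a : A) : subvs_of U := vsproj U (fact (vsval u) a).
Lemma vsval_sact u a : vsval (sact u a) = fact (vsval u) a.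
Proof. by rewrite /sact vsprojK // HU // subvsP. Qed.
Lemma sact_linl a c x y : sact (c *: x + y) a = c *: sact x a + sact y a.
Proof. by apply: subvs_inj; rewrite !linearP /= !vsval_sact linearP fact_linl. Qed.
Lemma sact_linr x c a b : sact x (c *: a + b) = c *: sact x a + sact x b.
Proof. by apply: subvs_inj; rewrite !linearP /= !vsval_sact fact_linr. Qed.
Lemma sact1 x : sact x 1 = x.
Proof. by apply: subvs_inj; rewrite vsval_sact fact1. Qed.
Lemma sactM x a b : sact x (a * b) = sact (sact x a) b.
Proof. by apply: subvs_inj; rewrite !vsval_sact factM. Qed.
Definition SubM : fmod A := @FMod _ _ (subvs_of U) sact sact_linl sact_linr sact1 sactM.
Lemma vsval_hom : is_hom (vsval : SubM -> X).
Proof. by split => [c x y|x a]; [rewrite linearP | rewrite /= vsval_sact]. Qed.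
End Sub.

Section Quo.
Variables (X : fmod A) (U : {vspace X}).
Hypothesis HU : forall x a, x \in U -> fact x a \in U.
Definition qpr (x : X) : subvs_of (U^C)%VS := vsproj (U^C)%VS (x - projv U x).
Lemma qpr_val x : vsval (qpr x) = x - projv U x.
Proof. by rewrite /qpr vsprojK // memv_projC. Qed.
Lemma qpr_lin c x y : qpr (c *: x + y) = c *: qpr x + qpr y.
Proof. by apply: subvs_inj; rewrite linearP /= !qpr_val linearP /=; rewrite scalerBr addrACA opprD. Qed.
Lemma qpr_eq0 x : qpr x = 0 <-> x \in U.
Proof.
split => [H|Hx].
  have : vsval (qpr x) = 0 by rewrite H linear0.
  by rewrite qpr_val => /eqP; rewrite subr_eq0 => /eqP ->; apply: memv_proj.
by apply: subvs_inj; rewrite qpr_val projv_id // subrr linear0.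
Qed.
Lemma qprB x y : qpr (x - y) = qpr x - qpr y.
Proof. by rewrite -scaleN1r -[_ - qpr y]addrC -scaleN1r -qpr_lin addrC. Qed.
Lemma qpr_eq x y : qpr x = qpr y <-> x - y \in U.
Proof. by rewrite -qpr_eq0 qprB; split => [->|/eqP]; [rewrite subrr | rewrite subr_eq0 => /eqP]. Qed.
Lemma qpr_vsval y : qpr (vsval y) = y.
Proof.
apply: subvs_inj; rewrite qpr_val.
have : vsval y \in lker (projv U) by rewrite lker_proj subvsP.
by rewrite memv_ker => /eqP ->; rewrite subr0.
Qed.
Lemma qpr_vsval_diff x : x - vsval (qpr x) \in U.
Proof. by rewrite qpr_val opprB addrC subrK memv_proj. Qed.
Lemma qpr_fact x a : qpr (fact x a) = qpr (fact (vsval (qpr x)) a).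
Proof. by apply/qpr_eq; rewrite -mfactB HU // qpr_vsval_diff. Qed.
Definition qact (y : subvs_of (U^C)%VS) a := qpr (fact (vsval y) a).
Lemma qact_linl a c x y : qact (c *: x + y) a = c *: qact x a + qact y a.
Proof. by rewrite /qact linearP fact_linl qpr_lin. Qed.
Lemma qact_linr x c a b : qact x (c *: a + b) = c *: qact x a + qact x b.
Proof. by rewrite /qact fact_linr qpr_lin. Qed.
Lemma qact1 x : qact x 1 = x.
Proof. by rewrite /qact fact1 qpr_vsval. Qed.
Lemma qactM x a b : qact x (a * b) = qact (qact x a) b.
Proof. by rewrite /qact factM qpr_fact. Qed.
Definition QuoM : fmod A := @FMod _ _ (subvs_of (U^C)%VS) qact qact_linl qact_linr qact1 qactM.
Lemma qpr_hom : is_hom (qpr : X -> QuoM).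
Proof. by split => [c x y|x a]; [rewrite qpr_lin | rewrite /= /qact -qpr_fact]. Qed.
Lemma qpr_surj : surj (qpr : X -> QuoM).
Proof. by move=> y; exists (vsval y); rewrite qpr_vsval. Qed.
End Quo.
End Mods.

Section RF.
Variables (k : fieldType) (V : vectType k) (W : {vspace V}) (m : nat) (Psi : V -> 'rV[k]_m).
Hypothesis HP : forall c x y, Psi (c *: x + y) = c *: Psi x + Psi y.
Let b := vbasis W.
Let M := \matrix_(r < \dim W) Psi b`_r.
Lemma mulM (a : 'rV_(\dim W)) : a *m M = Psi (\sum_r a 0 r *: b`_r).
Proof.
have -> : Psi (\sum_r a 0 r *: b`_r) = mkLin HP (\sum_r a 0 r *: b`_r) by [].
rewrite linear_sum mulmx_sum_row; apply: eq_bigr => r _.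
by rewrite linearZ rowK.
Qed.
Lemma sum_in (a : 'rV_(\dim W)) : \sum_r a 0 r *: b`_r \in W.
Proof.
apply: memv_suml => r _; apply: memvZ.
by apply: (basis_mem (vbasisP W)); apply: mem_nth; rewrite size_tuple.
Qed.
Lemma sum_eq0 (a : 'rV_(\dim W)) : \sum_r a 0 r *: b`_r = 0 -> a = 0.
Proof.
move=> H; apply/rowP => r; rewrite mxE.
by move/freeP: (basis_free (vbasisP W)) => /(_ (fun r => a 0 r) H r).
Qed.
Lemma rowfree_iff : row_free M <-> (forall w, w \in W -> Psi w = 0 -> w = 0).
Proof.
split => [Hfr w Hw Pw | H].
  pose a := \row_r coord b r w.
  have Ha : a *m M = 0 *m M.
    rewrite mul0mx mulM -Pw; congr Psi; rewrite [RHS](coord_vbasis Hw).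
    by apply: eq_bigr => r _; rewrite mxE.
  have := row_free_inj Hfr Ha => a0.
  rewrite (coord_vbasis Hw) big1 // => r _.
  have := congr1 (fun v : 'rV_(\dim W) => v 0 r) a0; rewrite /= !mxE => ->.
  by rewrite scale0r.
rewrite -kermx_eq0; apply/negP => /negP Hk.
pose a := nz_row (kermx M).
have : a *m M = 0 by apply/sub_kermxP; exact: nz_row_sub.
rewrite mulM => /(H _ (sum_in a)) /sum_eq0 a0.
by move: Hk; rewrite -nz_row_eq0 -/a a0 eqxx.
Qed.
End RF.

Section Choice.
Variables (X Y : Type) (p : X -> Y) (Hs : surj p).
Definition sinv (y : Y) : X := proj1_sig (constructive_indefinite_description _ (Hs y)).
Lemma sinvK y : p (sinv y) = y.
Proof. exact: (proj2_sig (constructive_indefinite_description _ (Hs y))). Qed.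
End Choice.

Section Cok.
Variables (k : fieldType) (A : falgType k) (P0 P1 X : fmod A).

Definition IF (h : P1 -> P0) := forall u : P0 -> X, is_hom u ->
  (forall x, u (h x) = 0) -> forall y, u y = 0.

Lemma cok_zero_of_IF f C : is_cok f C -> IF f -> hom_zero C X.
Proof.
move=> [pi [Hpi Hs Hker]] HI h Hh c.
have := HI (fun y => h (pi y)) (hom_comp Hpi Hh).
have Hf : forall x, h (pi (f x)) = 0.
  move=> x; have -> : pi (f x) = 0 by apply/Hker; exists x.
  exact: hom0.
move=> /(_ Hf (sinv Hs c)); by rewrite sinvK.
Qed.

Lemma IF_of_cok_zero f C : is_cok f C -> hom_zero C X -> IF f.
Proof.
move=> [pi [Hpi Hs Hker]] HZ u Hu Huf.
have key : forall y y', pi y = pi y' -> u y = u y'.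
  move=> y y' E; have : pi (y - y') = 0 by rewrite (homB Hpi) E subrr.
  move/Hker => [x Hx]; apply/eqP; rewrite -subr_eq0 -(homB Hu) -Hx; exact/eqP/Huf.
pose v c := u (sinv Hs c).
have Hv : is_hom v.
  split => [c c1 c2|c a]; rewrite /v.
    rewrite -(hom_lin Hu) -/(v _); apply: key.
    by rewrite sinvK (hom_lin Hpi) !sinvK.
  rewrite -(hom_fact Hu); apply: key.
  by rewrite sinvK (hom_fact Hpi) sinvK.
move=> y; rewrite (key y (sinv Hs (pi y))) ?sinvK //.
exact: (HZ v Hv).
Qed.

Lemma cok_exists (f : P1 -> P0) : is_hom f -> exists C, is_cok f C.
Proof.
move=> Hf.
pose P := fun y : P0 => exists x, f x = y.
have P0' : P 0 by exists 0; exact: hom0.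
have PL : forall c x y, P x -> P y -> P (c *: x + y).
  by move=> c _ _ [x <-] [y <-]; exists (c *: x + y); rewrite (hom_lin Hf).
pose U := pvs P0' PL.
have HU : forall x a, x \in U -> fact x a \in U.
  move=> x a Hx; have [y Hy] := iffLR (pvsP P0' PL x) Hx.
  apply/(iffRL (pvsP P0' PL _)); exists (fact y a); rewrite -Hy; exact: hom_fact.
exists (QuoM HU); exists (qpr U); split.
- exact: qpr_hom.
- exact: qpr_surj.
- by move=> y; rewrite qpr_eq0; exact: pvsP.
Qed.

Lemma IF_orbit f h : aut_orbit f h -> IF h -> IF f.
Proof.
move=> [a [a' [b [b' [[Ha Ha' aK a'K] [Hb Hb' bK b'K] Hh]]]]] HI u Hu Huf y.
have Hu' := hom_comp Ha' Hu.
have := HI _ Hu' => /(_ _ (a y)); rewrite aK; apply.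
by move=> x; rewrite Hh aK.
Qed.
End Cok.

Section HomMisc.
Variables (k : fieldType) (A : falgType k).
Lemma is_hom_ext (X Y : fmod A) (h h' : X -> Y) : (forall x, h x = h' x) -> is_hom h' -> is_hom h.
Proof. by move=> E [H1 H2]; split => [c x y|x a]; rewrite !E. Qed.
Lemma is_hom_lc (X Y : fmod A) (u1 u2 : X -> Y) c :
  is_hom u1 -> is_hom u2 -> is_hom (fun y => c *: u1 y + u2 y).
Proof.
move=> H1 H2; split => [d x y|x a].
  rewrite (hom_lin H1) (hom_lin H2) !scalerDr !scalerA mulrC.
  by rewrite addrACA.
by rewrite fact_linl (hom_fact H1) (hom_fact H2).
Qed.
Lemma hom_sum (X Y : fmod A) (h : X -> Y) (Hh : is_hom h) I r P (F : I -> X) :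
  h (\sum_(i <- r | P i) F i) = \sum_(i <- r | P i) h (F i).
Proof. exact: (mkLin_sum (hom_lin Hh)). Qed.
Lemma vec_expand (V : vectType k) (x : V) :
  x = \sum_(i < \dim {:V}) coord (vbasis {:V}) i x *: (vbasis {:V})`_i.
Proof. exact: coord_vbasis (memvf x). Qed.
Lemma vec_eq0 (V : vectType k) (x : V) : (forall i, coord (vbasis {:V}) i x = 0) -> x = 0.
Proof. by move=> H; rewrite (vec_expand x) big1 // => i _; rewrite H scale0r. Qed.
Lemma orbit_hom (P0 P1 : fmod A) (f h : P1 -> P0) : is_hom f -> aut_orbit f h -> is_hom h.
Proof.
move=> Hf [a [a' [b [b' [[Ha _ _ _] [_ Hb' _ _] Hh]]]]].
exact: is_hom_ext Hh (hom_comp (hom_comp Hb' Hf) Ha).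
Qed.
End HomMisc.

Section Fmx.
Variables (k : fieldType) (A : falgType k) (P0 P1 X : fmod A).
Let e1 := vbasis {:P1}.
Let e0 := vbasis {:P0}.
Let eX := vbasis {:X}.

Definition PW (w : 'Hom(P0, X)) := is_hom (fun y => w y).
Lemma PW0 : PW 0.
Proof.
rewrite /PW /is_hom; split => [c x y|x a].
  by rewrite !zero_lfunE scaler0 addr0.
by rewrite !zero_lfunE mfact0.
Qed.
Lemma PWL c x y : PW x -> PW y -> PW (c *: x + y).
Proof.
move=> Hx Hy; apply: is_hom_ext (is_hom_lc c Hx Hy) => z.
by rewrite add_lfunE scale_lfunE.
Qed.
Definition HomW := pvs PW0 PWL.

Definition PsiF (h : P1 -> P0) (w : 'Hom(P0, X)) : 'rV[k]_(\dim {:P1} * \dim {:X}) :=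
  mxvec (\matrix_(l, j) coord eX j (w (h e1`_l))).

Lemma PsiF_lin h c x y : PsiF h (c *: x + y) = c *: PsiF h x + PsiF h y.
Proof.
rewrite /PsiF -linearP /=; congr mxvec; apply/matrixP => l j; rewrite !mxE.
by rewrite add_lfunE scale_lfunE linearP.
Qed.

Lemma PsiF0 h (Hh : is_hom h) w : PsiF h w = 0 <-> forall x, w (h x) = 0.
Proof.
split => [H|H].
  have Hb : forall l : 'I_(\dim {:P1}), w (h e1`_l) = 0.
    move=> l; apply: vec_eq0 => j.
    have := congr1 (fun v : 'rV_(_) => v 0 (mxvec_index l j)) H.
    by rewrite /PsiF mxvecE mxE /= mxE.
  move=> x; rewrite (vec_expand x) (hom_sum Hh) linear_sum big1 // => l _.
  by rewrite (homZ Hh) linearZ /= Hb scaler0.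
apply/eqP; rewrite /PsiF mxvec_eq0; apply/eqP/matrixP => l j.
by rewrite !mxE H linear0.
Qed.

Lemma IF_iff h (Hh : is_hom h) : IF X h <-> (forall w, w \in HomW -> PsiF h w = 0 -> w = 0).
Proof.
split => [HI w Hw /(PsiF0 Hh) H0|H u Hu Hu0 y].
  have Hw' : PW w by apply/(pvsP PW0 PWL).
  apply/lfunP => y; rewrite zero_lfunE; exact: HI Hw' H0 y.
pose w := mkHom (hom_lin Hu).
have Hw : w \in HomW.
  apply/(pvsP PW0 PWL); exact: (is_hom_ext (fun z => mkHomE (hom_lin Hu) z) Hu).
have := H w Hw; rewrite (PsiF0 Hh) => /(_ _) w0.
have : w = 0 by apply: w0 => x; rewrite mkHomE.
by move/lfunP => /(_ y); rewrite mkHomE zero_lfunE.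
Qed.

Definition MpF : 'M[{mpoly k[\dim {:P1} * \dim {:P0}]}]_(\dim HomW, \dim {:P1} * \dim {:X}) :=
  \matrix_(r < \dim HomW) mxvec (\matrix_(l, j)
     \sum_(m0 < \dim {:P0}) 'X_(mxvec_index l m0) * (coord eX j ((vbasis HomW)`_r e0`_m0))%:MP).

Lemma MpF_eval h (Hh : is_hom h) :
  map_mx (meval (hom_coords h)) MpF = \matrix_(r < \dim HomW) PsiF h (vbasis HomW)`_r.
Proof.
apply/matrixP => r t; rewrite !mxE; case/mxvec_indexP: t => l j.
rewrite /PsiF !mxvecE !mxE.
rewrite [in RHS](vec_expand (h e1`_l)) linear_sum linear_sum /=.
rewrite linear_sum /=; apply: eq_bigr => m0 _.
rewrite mevalM mevalXU mevalC /hom_coords mxvecE mxE.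
by rewrite linearZ /= linearZ /= (tnth_nth 0).
Qed.

Lemma IF_closure (f g : P1 -> P0) : is_hom f -> is_hom g ->
  zariski_closure (aut_orbit f) g -> IF X g -> IF X f.
Proof.
move=> Hf Hg Hcl HIg; apply: NNPP => HnIf.
have H1 : forall h, aut_orbit f h -> ~~ row_free (map_mx (meval (hom_coords h)) MpF).
  move=> h Hh; rewrite (MpF_eval (orbit_hom Hf Hh)); apply/negP.
  move/(rowfree_iff HomW (PsiF_lin h)) => H; apply: HnIf; apply: (IF_orbit Hh).
  exact/(IF_iff (orbit_hom Hf Hh)).
have := closure_not_free H1 Hcl; rewrite (MpF_eval Hg) => /negP; apply.
by apply/(rowfree_iff HomW (PsiF_lin g)); apply/(IF_iff Hg).
Qed.
End Fmx.

Section Nak.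
Variables (k : fieldType) (A : falgType k).

Lemma homA_comp (P Q : fmod A) (phi : Q -> A) (h : P -> Q) :
  homA phi -> is_hom h -> homA (fun y => phi (h y)).
Proof.
move=> [H1 H2] Hh; split => [c x y|x a]; first by rewrite (hom_lin Hh) H1.
by rewrite (hom_fact Hh) H2.
Qed.

Lemma homA_lmul (P : fmod A) (phi : P -> A) a : homA phi -> homA (fun y => a * phi y).
Proof.
move=> [H1 H2]; split => [c x y|x b]; first by rewrite H1 mulrDr scalerAr.
by rewrite H2 mulrA.
Qed.

Lemma homA_lc (P : fmod A) (phi psi : P -> A) c :
  homA phi -> homA psi -> homA (fun y => c *: phi y + psi y).
Proof.
move=> [H1 H2] [H3 H4]; split => [d x y|x b].
  by rewrite H1 H3 !scalerDr !scalerA mulrC addrACA.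
by rewrite H2 H4 mulrDl scalerAl.
Qed.

Variables (P N : fmod A) (pair : N -> (P -> A) -> k) (Hn : nakayama_dual pair).

Lemma pair_lin c n m phi : homA phi -> pair (c *: n + m) phi = c * pair n phi + pair m phi.
Proof. by case: Hn => H1 _ _ _ _; apply: H1. Qed.
Lemma pair0 phi : homA phi -> pair 0 phi = 0.
Proof.
move=> Hp; have := pair_lin (-1) 0 0 Hp.
by rewrite scaler0 addr0 mulN1r addNr.
Qed.
Lemma pairD n m phi : homA phi -> pair (n + m) phi = pair n phi + pair m phi.
Proof. by move=> Hp; rewrite -[n]scale1r pair_lin // mul1r scale1r. Qed.
Lemma pairZ c n phi : homA phi -> pair (c *: n) phi = c * pair n phi.
Proof. by move=> Hp; rewrite -[c *: n]addr0 pair_lin // pair0 // addr0. Qed.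
Lemma pairB n m phi : homA phi -> pair (n - m) phi = pair n phi - pair m phi.
Proof. by move=> Hp; rewrite pairD // -scaleN1r pairZ // mulN1r. Qed.
Lemma pair_sum I r Pr (F : I -> N) phi : homA phi ->
  pair (\sum_(i <- r | Pr i) F i) phi = \sum_(i <- r | Pr i) pair (F i) phi.
Proof.
move=> Hp; apply: (big_ind2 (fun n s => pair n phi = s)) => //; first exact: pair0.
by move=> x1 x2 y1 y2 <- <-; rewrite pairD.
Qed.
Lemma pair_ext n m : (forall phi, homA phi -> pair n phi = pair m phi) -> n = m.
Proof.
case: Hn => _ _ _ H4 _ H; apply/eqP; rewrite -subr_eq0; apply/eqP/H4 => phi Hp.
by rewrite pairB // H // subrr.
Qed.
Lemma pair_linr n c phi psi : homA phi -> homA psi ->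
  pair n (fun x => c *: phi x + psi x) = c * pair n phi + pair n psi.
Proof. by case: Hn => _ H2 _ _ _; apply: H2. Qed.
Lemma pair_fact n a phi : homA phi -> pair (fact n a) phi = pair n (fun x => a * phi x).
Proof. by case: Hn => _ _ H3 _ _; apply: H3. Qed.
Lemma pair_repr (xi : (P -> A) -> k) :
  (forall c phi psi, homA phi -> homA psi ->
             xi (fun x => c *: phi x + psi x) = c * xi phi + xi psi) ->
  exists n, forall phi, homA phi -> pair n phi = xi phi.
Proof. by case: Hn => _ _ _ _ H5; apply: H5. Qed.

Variables (b : P -> P) (Hb : is_hom b).
Lemma transport_ex n : exists n', forall chi, homA chi -> pair n' chi = pair n (fun y => chi (b y)).
Proof.
apply: pair_repr => c phi psi Hp Hq.
by rewrite (pair_linr _ _ (homA_comp Hp Hb) (homA_comp Hq Hb)).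
Qed.
Definition transport n := proj1_sig (constructive_indefinite_description _ (transport_ex n)).
Lemma transportP n chi : homA chi -> pair (transport n) chi = pair n (fun y => chi (b y)).
Proof. exact: (proj2_sig (constructive_indefinite_description _ (transport_ex n))). Qed.
Lemma transport_hom : is_hom transport.
Proof.
split => [c x y|x a]; apply: pair_ext => chi Hc.
  rewrite (transportP (c *: x + y) Hc) (pair_lin _ _ _ (homA_comp Hc Hb)).
  by rewrite (pair_lin _ _ _ Hc) (transportP x Hc) (transportP y Hc).
rewrite (transportP (fact x a) Hc) (pair_fact _ _ (homA_comp Hc Hb)).
rewrite (pair_fact _ _ Hc) (transportP x (homA_lmul a Hc)) //.
Qed.
End Nak.

Section J.
Variables (k : fieldType) (A : falgType k) (P0 P1 X N : fmod A).
Variables (pair : N -> (P1 -> A) -> k) (Hn : nakayama_dual pair).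

Definition J (h : P1 -> P0) := forall u : X -> N, is_hom u ->
  (forall x phi, homA phi -> pair (u x) (fun y => phi (h y)) = 0) -> forall x, u x = 0.

Lemma Knu_zero_of_J (f : P1 -> P0) (K : fmod A) (iota : K -> N) : is_hom iota -> injective iota ->
  (forall n, (exists x, iota x = n) <->
          (forall phi : P0 -> A, homA phi -> pair n (fun x => phi (f x)) = 0)) ->
  J f -> hom_zero X K.
Proof.
move=> Hi Hinj Hiff HJ h Hh x; apply: Hinj; rewrite (hom0 Hi).
apply: (HJ _ (hom_comp Hh Hi)) => y phi Hp.
by apply: (iffLR (Hiff (iota (h y)))) => //; exists (h y).
Qed.

Lemma J_of_Knu_zero (g : P1 -> P0) : is_hom g -> (forall K, is_Knu g K -> hom_zero X K) -> J g.
Proof.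
move=> Hg HK u Hu Hker x.
pose Pr := fun n : N => forall phi : P0 -> A, homA phi -> pair n (fun y => phi (g y)) = 0.
have Pr0 : Pr 0 by move=> phi Hp; exact: (pair0 Hn (homA_comp Hp Hg)).
have PrL : forall c x y, Pr x -> Pr y -> Pr (c *: x + y).
  by move=> c n m Hx Hy phi Hp; rewrite (pair_lin Hn _ _ _ (homA_comp Hp Hg)) Hx // Hy // mulr0 addr0.
pose U := pvs Pr0 PrL.
have HU : forall n a, n \in U -> fact n a \in U.
  move=> n a Hx; apply/(iffRL (pvsP Pr0 PrL _)) => phi Hp.
  rewrite (pair_fact Hn _ _ (homA_comp Hp Hg)).
  by apply: (iffLR (pvsP Pr0 PrL n) Hx _ (homA_lmul a Hp)).
have Hin : forall x, u x \in U by move=> y; apply/(iffRL (pvsP Pr0 PrL _)) => phi Hp; apply: Hker.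
have HKg : is_Knu g (SubM HU).
  exists N, pair, vsval; split => //; first exact: vsval_hom.
  - exact: subvs_inj.
  - move=> n; split => [[y <-]|Hnn]; first by apply/(pvsP Pr0 PrL); exact: subvsP.
    by exists (vsproj U n); rewrite vsprojK //; apply/(pvsP Pr0 PrL).
pose v := fun y => (vsproj U (u y) : SubM HU).
have Hv : is_hom v.
  split => [c y z|y a]; first by rewrite /v (hom_lin Hu) linearP.
  apply: subvs_inj; rewrite /v /= (vsval_sact HU).
  by rewrite !vsprojK ?Hin // (hom_fact Hu).
have := HK _ HKg v Hv x; rewrite /v => /(congr1 vsval); rewrite vsprojK ?Hin // => ->; rewrite linear0.
Qed.

Lemma J_orbit (f h : P1 -> P0) : is_hom f -> aut_orbit f h -> J h -> J f.
Proof.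
move=> Hf Horb; have Hhh := orbit_hom Hf Horb.
move: Horb => [a [a' [b [b' [[Ha Ha' aK a'K] [Hb Hb' bK b'K] Hh]]]]] HJ u Hu Hker x.
pose u' := fun y => transport Hn Hb (u y).
have Hu' : is_hom u' := hom_comp Hu (transport_hom Hn Hb).
have H0 : forall y, u' y = 0.
  apply: HJ => // y phi Hp.
  rewrite /u' (transportP Hn Hb (u y) (homA_comp Hp Hhh)).
  have -> : (fun z => phi (h (b z))) = (fun z => (fun w => phi (a w)) (f z)).
    by apply: functional_extensionality => z; rewrite Hh bK.
  exact: Hker (homA_comp Hp Ha).
apply: (pair_ext Hn) => theta Ht; rewrite (pair0 Hn Ht).
have -> : theta = (fun z => (fun w => theta (b' w)) (b z)).
  by apply: functional_extensionality => z; rewrite bK.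
have E := transportP Hn Hb (u x) (homA_comp Ht Hb'); rewrite /= in E.
by rewrite -E -/(u' x) H0 (pair0 Hn (homA_comp Ht Hb')).
Qed.
End J.

Lemma meval_sum (R : comNzRingType) n (v : 'I_n -> R) I r (Pr : pred I) (F : I -> {mpoly R[n]}) :
  (\sum_(i <- r | Pr i) F i).@[v] = \sum_(i <- r | Pr i) (F i).@[v].
Proof.
elim: r => [|i r IH]; first by rewrite !big_nil meval0.
by rewrite !big_cons; case: (Pr i) => //; rewrite mevalD IH.
Qed.

Section HA.
Variables (k : fieldType) (A : falgType k) (P : fmod A).
Lemma homA_ext (phi psi : P -> A) : (forall x, phi x = psi x) -> homA psi -> homA phi.
Proof. by move=> E [H1 H2]; split => [c x y|x a]; rewrite !E. Qed.
Definition PA (w : 'Hom(P, A)) := homA (fun y => w y).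
Lemma PA0 : PA 0.
Proof.
rewrite /PA /homA; split => [c x y|x a]; rewrite !zero_lfunE.
  by rewrite scaler0 addr0.
by rewrite mul0r.
Qed.
Lemma PAL c x y : PA x -> PA y -> PA (c *: x + y).
Proof.
move=> Hx Hy; apply: homA_ext (homA_lc c Hx Hy) => z.
by rewrite add_lfunE scale_lfunE.
Qed.
Definition HA := pvs PA0 PAL.
Lemma HAP w : w \in HA <-> homA (fun y => w y).
Proof. exact: pvsP. Qed.
End HA.

Section Jmx.
Variables (k : fieldType) (A : falgType k) (P0 P1 X N : fmod A).
Variables (pair : N -> (P1 -> A) -> k) (Hn : nakayama_dual pair).
Let e1 := vbasis {:P1}.
Let e0 := vbasis {:P0}.
Let eX := vbasis {:X}.
Let H1 := HA P1.
Let H0 := HA P0.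
Let WJ := HomW X N.

Definition lam (n : N) (psi : 'Hom(P1, A)) : k := pair n (fun y => projv H1 psi y).
Lemma projv_homA psi : homA (fun y => projv H1 psi y).
Proof. by apply/HAP; exact: memv_proj. Qed.
Lemma lamE n psi : psi \in H1 -> lam n psi = pair n (fun y => psi y).
Proof. by move=> Hp; rewrite /lam projv_id. Qed.
Lemma lam_linn c n m psi : lam (c *: n + m) psi = c * lam n psi + lam m psi.
Proof. exact: (pair_lin Hn _ _ _ (projv_homA psi)). Qed.
Lemma lam0n psi : lam 0 psi = 0.
Proof. exact: (pair0 Hn (projv_homA psi)). Qed.
Lemma lam_linp n c p q : lam n (c *: p + q) = c * lam n p + lam n q.
Proof.
rewrite /lam -(pair_linr Hn _ _ (projv_homA p) (projv_homA q)).
congr (pair n); apply: functional_extensionality => y.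
by rewrite linearP add_lfunE scale_lfunE.
Qed.
Lemma lam0p n : lam n 0 = 0.
Proof.
have := lam_linp n 1 0 0; rewrite scaler0 addr0 mul1r => E.
by apply: (@addrI _ (lam n 0)); rewrite addr0 -E.
Qed.
Lemma lamZn c n psi : lam (c *: n) psi = c * lam n psi.
Proof. by rewrite -[c *: n]addr0 lam_linn lam0n addr0. Qed.
Lemma lamZp n c psi : lam n (c *: psi) = c * lam n psi.
Proof. by rewrite -[c *: psi]addr0 lam_linp lam0p addr0. Qed.
Lemma lam_sumn I r Pr (F : I -> N) psi :
  lam (\sum_(i <- r | Pr i) F i) psi = \sum_(i <- r | Pr i) lam (F i) psi.
Proof.
elim: r => [|i r IH]; first by rewrite !big_nil lam0n.
rewrite !big_cons; case: (Pr i) => //.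
by rewrite -IH -{1}[F i]scale1r lam_linn mul1r.
Qed.
Lemma lam_sump I r Pr (F : I -> 'Hom(P1, A)) n :
  lam n (\sum_(i <- r | Pr i) F i) = \sum_(i <- r | Pr i) lam n (F i).
Proof.
elim: r => [|i r IH]; first by rewrite !big_nil lam0p.
rewrite !big_cons; case: (Pr i) => //.
by rewrite -IH -{1}[F i]scale1r lam_linp mul1r.
Qed.

Lemma Elm_lin (l : 'I_(\dim {:P1})) (m : 'I_(\dim {:P0})) c (x y : P1) :
  coord e1 l (c *: x + y) *: e0`_m = c *: (coord e1 l x *: e0`_m) + coord e1 l y *: e0`_m.
Proof. by rewrite linearP /= scalerDl scalerA. Qed.
Definition Elm l m : 'Hom(P1, P0) := mkHom (Elm_lin l m).
Lemma ElmE l m y : Elm l m y = coord e1 l y *: e0`_m.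
Proof. exact: mkHomE. Qed.
Definition Hhat (h : P1 -> P0) : 'Hom(P1, P0) :=
  \sum_l \sum_m hom_mx h l m *: Elm l m.
Lemma HhatE h (Hh : is_hom h) y : Hhat h y = h y.
Proof.
rewrite [in RHS](vec_expand y) (hom_sum Hh) sum_lfunE; apply: eq_bigr => l _.
rewrite sum_lfunE (homZ Hh) [h _](vec_expand (h _)) scaler_sumr; apply: eq_bigr => m _.
by rewrite scale_lfunE ElmE scalerA mulrC -scalerA /hom_mx mxE (tnth_nth 0).
Qed.

Definition PsiJ (h : P1 -> P0) (w : 'Hom(X, N)) : 'rV[k]_(\dim {:X} * \dim H0) :=
  mxvec (\matrix_(i, j) lam (w eX`_i) ((vbasis H0)`_j \o Hhat h)%VF).
Lemma PsiJ_lin h c x y : PsiJ h (c *: x + y) = c *: PsiJ h x + PsiJ h y.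
Proof.
rewrite /PsiJ -linearP /=; congr mxvec; apply/matrixP => i j; rewrite !mxE.
by rewrite add_lfunE scale_lfunE lam_linn.
Qed.

Lemma pair_comp h (Hh : is_hom h) n (phi : 'Hom(P0, A)) : phi \in H0 ->
  lam n (phi \o Hhat h)%VF = pair n (fun y => phi (h y)).
Proof.
move=> Hp; have Hc : (phi \o Hhat h)%VF \in H1.
  apply/HAP; apply: homA_ext (homA_comp (iffLR (HAP phi) Hp) Hh) => y.
  by rewrite comp_lfunE HhatE.
rewrite lamE //; congr (pair n); apply: functional_extensionality => y.
by rewrite comp_lfunE HhatE.
Qed.

Lemma PsiJ0 h (Hh : is_hom h) w : PsiJ h w = 0 <->
  forall x phi, homA phi -> pair (w x) (fun y => phi (h y)) = 0.
Proof.
split => [H x phi Hp|H].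
  have Hb : forall (i : 'I_(\dim {:X})) (j : 'I_(\dim H0)), lam (w eX`_i) ((vbasis H0)`_j \o Hhat h)%VF = 0.
    move=> i j; have := congr1 (fun v : 'rV_(_) => v 0 (mxvec_index i j)) H.
    by rewrite /PsiJ mxvecE mxE /= mxE.
  pose phiL := mkHom (fun c x y => (proj1 Hp) c x y).
  have HphiL : phiL \in H0.
    by apply/HAP; exact: (homA_ext (fun z => mkHomE (fun c x y => (proj1 Hp) c x y) z) Hp).
  have -> : (fun y => phi (h y)) = (fun y => phiL (h y)).
    by apply: functional_extensionality => y; rewrite mkHomE.
  rewrite -pair_comp // (coord_vbasis HphiL).
  have -> : ((\sum_(j < \dim H0) coord (vbasis H0) j phiL *: (vbasis H0)`_j) \o Hhat h)%VF
     = \sum_(j < \dim H0) coord (vbasis H0) j phiL *: ((vbasis H0)`_j \o Hhat h)%VF.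
    apply/lfunP => y; rewrite comp_lfunE; set z := Hhat h y.
    rewrite !sum_lfunE; apply: eq_bigr => j _.
    by rewrite !scale_lfunE comp_lfunE.
  rewrite lam_sump big1 // => j _; rewrite lamZp.
  rewrite (vec_expand x) linear_sum lam_sumn big1 ?mulr0 // => i _.
  by rewrite linearZ lamZn /= Hb mulr0.
apply/eqP; rewrite /PsiJ mxvec_eq0; apply/eqP/matrixP => i j.
rewrite !mxE pair_comp //; last by apply: vbasis_mem; apply: mem_nth; rewrite size_tuple.
apply: H; apply/HAP; apply: vbasis_mem; apply: mem_nth; by rewrite size_tuple.
Qed.

Lemma J_iff h (Hh : is_hom h) : J X pair h <-> (forall w, w \in WJ -> PsiJ h w = 0 -> w = 0).
Proof.
split => [HJ w Hw /(PsiJ0 Hh) Hz|H u Hu Hu0 x].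
  have Hw' : is_hom (fun y => w y) by apply/(pvsP (PW0 X N) (PWL (P0:=X) (X:=N))).
  apply/lfunP => y; rewrite zero_lfunE; exact: HJ Hw' Hz y.
pose w := mkHom (hom_lin Hu).
have Hw : w \in WJ.
  apply/(pvsP (PW0 X N) (PWL (P0:=X) (X:=N))); exact: (is_hom_ext (fun z => mkHomE (hom_lin Hu) z) Hu).
have := H w Hw; rewrite (PsiJ0 Hh) => w0.
have : w = 0 by apply: w0 => y phi Hp; rewrite mkHomE; exact: Hu0.
by move/lfunP => /(_ x); rewrite mkHomE zero_lfunE.
Qed.

Definition MpJ : 'M[{mpoly k[\dim {:P1} * \dim {:P0}]}]_(\dim WJ, \dim {:X} * \dim H0) :=
  \matrix_(r < \dim WJ) mxvec (\matrix_(i, j)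
     \sum_l \sum_m 'X_(mxvec_index l m) *
        (lam ((vbasis WJ)`_r eX`_i) ((vbasis H0)`_j \o Elm l m)%VF)%:MP).

Lemma MpJ_eval h :
  map_mx (meval (hom_coords h)) MpJ = \matrix_(r < \dim WJ) PsiJ h (vbasis WJ)`_r.
Proof.
apply/matrixP => r t; rewrite !mxE; case/mxvec_indexP: t => i j.
rewrite /PsiJ !mxvecE !mxE.
have -> : ((vbasis H0)`_j \o Hhat h)%VF =
    \sum_l \sum_m hom_mx h l m *: ((vbasis H0)`_j \o Elm l m)%VF.
  apply/lfunP => y; rewrite comp_lfunE /Hhat sum_lfunE linear_sum sum_lfunE.
  apply: eq_bigr => l _; rewrite !sum_lfunE linear_sum; apply: eq_bigr => m _.
  by rewrite !scale_lfunE linearZ comp_lfunE.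
rewrite meval_sum lam_sump; apply: eq_bigr => l _.
rewrite meval_sum lam_sump; apply: eq_bigr => m _.
by rewrite mevalM mevalXU mevalC /hom_coords mxvecE lamZp.
Qed.
End Jmx.

Section JClosure.
Variables (k : fieldType) (A : falgType k) (P0 P1 X N : fmod A).
Variables (pair : N -> (P1 -> A) -> k) (Hn : nakayama_dual pair).

Lemma J_closure (f g : P1 -> P0) : is_hom f -> is_hom g ->
  zariski_closure (aut_orbit f) g -> J X pair g -> J X pair f.
Proof.
move=> Hf Hg Hcl HJg; apply: NNPP => HnJf.
have H1 : forall h, aut_orbit f h -> ~~ row_free (map_mx (meval (hom_coords h)) (MpJ P0 X pair)).
  move=> h Hh; rewrite (MpJ_eval X Hn); apply/negP.
  move/(rowfree_iff (HomW X N) (PsiJ_lin Hn h)) => H; apply: HnJf; apply: (J_orbit Hn Hf Hh).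
  exact/(J_iff X Hn (orbit_hom Hf Hh)).
have := closure_not_free H1 Hcl; rewrite (MpJ_eval X Hn) => /negP; apply.
by apply/(rowfree_iff (HomW X N) (PsiJ_lin Hn g)); apply/(J_iff X Hn Hg).
Qed.
End JClosure.

Section ExDim.
Variables (k : fieldType) (V : vectType k) (Pr : {vspace V} -> Prop).
Let pb (d : nat) : bool :=
  if excluded_middle_informative (exists U, Pr U /\ \dim U = d) then true else false.
Lemma pbP d : pb d <-> exists U, Pr U /\ \dim U = d.
Proof. by rewrite /pb; case: excluded_middle_informative. Qed.

Lemma ex_max_dim U0 : Pr U0 -> exists U, Pr U /\ forall U', Pr U' -> (\dim U' <= \dim U)%N.
Proof.
move=> H0.
have exP : exists i, pb i by exists (\dim U0); apply/pbP; exists U0.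
have ubP : forall i, pb i -> (i <= \dim {:V})%N.
  by move=> i /pbP [U [_ <-]]; apply: dimvS; apply: subvf.
case: (ex_maxnP exP ubP) => i /pbP [U [HU <-]] Hmax.
by exists U; split => // U' HU'; apply: Hmax; apply/pbP; exists U'.
Qed.

Lemma ex_min_dim U0 : Pr U0 -> exists U, Pr U /\ forall U', Pr U' -> (\dim U <= \dim U')%N.
Proof.
move=> H0.
have exP : exists i, pb i by exists (\dim U0); apply/pbP; exists U0.
case: (ex_minnP exP) => i /pbP [U [HU <-]] Hmin.
by exists U; split => // U' HU'; apply: Hmin; apply/pbP; exists U'.
Qed.
End ExDim.

Section Inclusions.
Variables (k : fieldType) (A : falgType k) (P0 P1 : fmod A) (f g : P1 -> P0).
Hypotheses (Hf : is_hom f) (Hg : is_hom g) (Hcl : zariski_closure (aut_orbit f) g).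

Lemma Fbar_incl X : Fbarf g X -> Fbarf f X.
Proof.
move=> HF C HC; have [Cg HCg] := cok_exists Hg.
have IFg := IF_of_cok_zero HCg (HF _ HCg).
exact: cok_zero_of_IF HC (IF_closure Hf Hg Hcl IFg).
Qed.

Lemma Tbar_incl X : Tbarf g X -> Tbarf f X.
Proof.
move=> HT K [N [pair [iota [Hn Hi Hinj Hiff]]]].
have Jg := J_of_Knu_zero (X := X) Hn Hg HT.
exact: Knu_zero_of_J Hi Hinj Hiff (J_closure Hn Hf Hg Hcl Jg).
Qed.
End Inclusions.

Section ModLemmas.
Variables (k : fieldType) (A : falgType k).

Lemma stable0 (X : fmod A) : forall (x : X) a, x \in (0%VS : {vspace X}) -> fact x a \in (0%VS : {vspace X}).
Proof. by move=> x a; rewrite !memv0 => /eqP ->; rewrite mfact0. Qed.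

Lemma zero_hom (X Y : fmod A) : is_hom (fun _ : X => (0 : Y)).
Proof. by split => [c x y|x a]; rewrite ?scaler0 ?addr0 ?mfact0. Qed.

Lemma sub0_triv (X : fmod A) (y : SubM (@stable0 X)) : y = 0.
Proof. by apply: subvs_inj; rewrite linear0; apply/eqP; rewrite -memv0; exact: subvsP. Qed.

Lemma corestr_hom (X Y : fmod A) (U : {vspace X}) (HU : forall x a, x \in U -> fact x a \in U)
  (u : Y -> X) : is_hom u -> (forall y, u y \in U) -> is_hom (fun y => (vsproj U (u y) : SubM HU)).
Proof.
move=> Hu Hin; split => [c y z|y a]; first by rewrite (hom_lin Hu) linearP.
apply: subvs_inj; rewrite /= (vsval_sact HU) !vsprojK ?Hin //; first exact: (hom_fact Hu).
Qed.

Lemma vsproj_eq0 (X : fmod A) (U : {vspace X}) x : x \in U -> vsproj U x = 0 -> x = 0.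
Proof. by move=> Hx /(congr1 vsval); rewrite vsprojK // linear0. Qed.
End ModLemmas.

Section TfProof.
Variables (k : fieldType) (A : falgType k) (P0 P1 : fmod A) (f g : P1 -> P0).
Hypotheses (Hg : is_hom g) (FbarI : forall Y, Fbarf g Y -> Fbarf f Y).
Variables (T : fmod A -> Prop) (HT : torsion_class T) (HCg : forall C, is_cok g C -> T C).

Lemma cok_in_T (C : fmod A) : is_cok f C -> T C.
Proof.
move=> HC.
pose Good := fun U : {vspace C} => exists HU : (forall x a, x \in U -> fact x a \in U), T (SubM HU).
have G0 : Good 0%VS.
  exists (@stable0 _ _ C); have [Cg HCg'] := cok_exists Hg.
  apply: (HT.1 Cg (SubM (@stable0 _ _ C)) (fun _ => 0) (HCg HCg') (zero_hom _ _)).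
  by move=> y; exists 0; rewrite (sub0_triv y).
have [M [[HM TM] Mmax]] := ex_max_dim G0.
have FQ : Fbarf g (QuoM HM).
  move=> C' HC' h Hh c; apply: NNPP => hne.
  pose PI := fun y : QuoM HM => exists c, h c = y.
  have PI0 : PI 0 by exists 0; exact: hom0.
  have PIL : forall c x y, PI x -> PI y -> PI (c *: x + y).
    by move=> d _ _ [x <-] [y <-]; exists (d *: x + y); rewrite (hom_lin Hh).
  pose I := pvs PI0 PIL.
  have HI : forall y a, y \in I -> fact y a \in I.
    move=> y a /(pvsP PI0 PIL) [x <-]; apply/(pvsP PI0 PIL); exists (fact x a).
    exact: hom_fact.
  pose PM := fun x : C => qpr M x \in I.
  have q0 : qpr M 0 = 0 by apply: (iffRL (qpr_eq0 _ _)); exact: mem0v.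
  have PM0 : PM 0 by rewrite /PM q0 mem0v.
  have PML : forall c x y, PM x -> PM y -> PM (c *: x + y).
    by move=> d x y Hx Hy; rewrite /PM qpr_lin memvD ?memvZ.
  pose M' := pvs PM0 PML.
  have HM' : forall x a, x \in M' -> fact x a \in M'.
    move=> x a /(pvsP PM0 PML) Hx; apply/(pvsP PM0 PML).
    by rewrite /PM (hom_fact (qpr_hom HM)) HI.
  have MM' : forall x, x \in M -> x \in M'.
    move=> x Hx; apply/(pvsP PM0 PML); rewrite /PM.
    by rewrite (iffRL (qpr_eq0 M x) Hx) mem0v.
  have TI : T (SubM HI).
    apply: (HT.1 C' (SubM HI) (fun c => vsproj I (h c)) (HCg HC')).
      apply: corestr_hom => // y; apply/(pvsP PI0 PIL); by exists y.
    move=> y; have := subvsP y => /(pvsP PI0 PIL) [x Hx]; exists x.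
    by rewrite Hx vsvalK.
  have TM' : T (SubM HM').
    pose i := fun u : SubM HM => (vsproj M' (vsval u) : SubM HM').
    pose p := fun u : SubM HM' => (vsproj I (qpr M (vsval u)) : SubM HI).
    have Hvu : forall u : SubM HM', qpr M (vsval u) \in I.
      by move=> u; apply/(pvsP PM0 PML); exact: subvsP.
    apply: (HT.2 _ _ _ i p _ TM TI); split.
    - apply: corestr_hom; first exact: vsval_hom.
      by move=> u; apply: MM'; exact: subvsP.
    - apply: corestr_hom => //; exact: hom_comp (vsval_hom HM') (qpr_hom HM).
    - move=> u v /(congr1 vsval); rewrite !vsprojK ?MM' ?subvsP //; exact: subvs_inj.
    - move=> y; exists (vsproj M' (vsval (vsval y))).
      have Hy : vsval (vsval y) \in M'.
        apply/(pvsP PM0 PML); rewrite /PM qpr_vsval; exact: subvsP.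
      by rewrite /p vsprojK // qpr_vsval vsvalK.
    - move=> u; split => [Hp|[v <-]].
        have : qpr M (vsval u) = 0 by apply: vsproj_eq0 Hp; exact: Hvu.
        move/qpr_eq0 => Hu; exists (vsproj M (vsval u)).
        by apply: subvs_inj; rewrite /i !vsprojK // MM'.
      rewrite /p /i vsprojK ?MM' ?subvsP //.
      by rewrite (iffRL (qpr_eq0 M _) (subvsP v)) linear0.
  have Hle := Mmax M' (ex_intro _ HM' TM').
  have Hsub : (M <= M')%VS by apply/subvP.
  have Hneq : M != M'.
    apply/eqP => EM; apply: hne.
    have Hx0 : vsval (h c) \in M'.
      by apply/(pvsP PM0 PML); rewrite /PM qpr_vsval; apply/(pvsP PI0 PIL); exists c.
    rewrite -EM in Hx0; have := iffRL (qpr_eq0 M _) Hx0.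
    by rewrite qpr_vsval.
  by move: Hle; rewrite leqNgt (ltn_leqif (dimv_leqif_eq Hsub)) Hneq.
have HZ := FbarI FQ HC (qpr_hom HM).
apply: (HT.1 (SubM HM) _ vsval TM (vsval_hom HM)).
move=> x; exists (vsproj M x); rewrite vsprojK //.
by apply/(qpr_eq0 M _); exact: HZ.
Qed.
End TfProof.

Section KnuEx.
Variables (k : fieldType) (A : falgType k) (P0 P1 N : fmod A).
Variables (pair : N -> (P1 -> A) -> k) (Hn : nakayama_dual pair).
Lemma Knu_exists (g : P1 -> P0) : is_hom g -> exists K, is_Knu g K.
Proof.
move=> Hg.
pose Pr := fun n : N => forall phi : P0 -> A, homA phi -> pair n (fun y => phi (g y)) = 0.
have Pr0 : Pr 0 by move=> phi Hp; exact: (pair0 Hn (homA_comp Hp Hg)).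
have PrL : forall c x y, Pr x -> Pr y -> Pr (c *: x + y).
  by move=> c n m Hx Hy phi Hp; rewrite (pair_lin Hn _ _ _ (homA_comp Hp Hg)) Hx // Hy // mulr0 addr0.
pose U := pvs Pr0 PrL.
have HU : forall n a, n \in U -> fact n a \in U.
  move=> n a Hx; apply/(iffRL (pvsP Pr0 PrL _)) => phi Hp.
  rewrite (pair_fact Hn _ _ (homA_comp Hp Hg)).
  by apply: (iffLR (pvsP Pr0 PrL n) Hx _ (homA_lmul a Hp)).
exists (SubM HU), N, pair, vsval; split => //; first exact: vsval_hom.
- exact: subvs_inj.
- move=> n; split => [[y <-]|Hnn]; first by apply/(pvsP Pr0 PrL); exact: subvsP.
  by exists (vsproj U n); rewrite vsprojK //; apply/(pvsP Pr0 PrL).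
Qed.
End KnuEx.

Lemma inj_of_ker (k : fieldType) (A : falgType k) (X Y : fmod A) (j : X -> Y) :
  is_hom j -> (forall z, j z = 0 -> z = 0) -> injective j.
Proof.
move=> Hj H z1 z2 E; apply/eqP; rewrite -subr_eq0; apply/eqP/H.
by rewrite (homB Hj) E subrr.
Qed.

Section FfProof.
Variables (k : fieldType) (A : falgType k) (P0 P1 : fmod A) (f g : P1 -> P0).
Hypotheses (Hg : is_hom g) (TbarI : forall Y, Tbarf g Y -> Tbarf f Y).
Variables (F : fmod A -> Prop) (HF : torsionfree_class F) (HKg : forall K, is_Knu g K -> F K).

Lemma Knu_in_F (K : fmod A) : is_Knu f K -> F K.
Proof.
move=> HK; have HK' := HK; move: HK' => [N [pair [iota [Hn _ _ _]]]].
have [Kg HKg'] := Knu_exists Hn Hg.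
pose Good := fun U : {vspace K} => exists HU : (forall x a, x \in U -> fact x a \in U), F (QuoM HU).
have G0 : Good fullv.
  have Hf : forall (x : K) a, x \in fullv -> fact x a \in fullv by move=> *; exact: memvf.
  exists Hf; apply: (HF.1 Kg (QuoM Hf) (fun _ => 0) (HKg HKg') (zero_hom _ _)).
  move=> y1 y2 _; rewrite -(qpr_vsval y1) -(qpr_vsval y2).
  by rewrite (iffRL (qpr_eq0 _ _) (memvf _)) (iffRL (qpr_eq0 _ _) (memvf _)).
have [M [[HM FM] Mmin]] := ex_min_dim G0.
have TS : Tbarf g (SubM HM).
  move=> K' HK'' h Hh m0; apply: NNPP => hne.
  pose PM := fun x : K => x \in M /\ h (vsproj M x) = 0.
  have PM0 : PM 0 by split; [exact: mem0v | rewrite linear0 (hom0 Hh)].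
  have PML : forall c x y, PM x -> PM y -> PM (c *: x + y).
    move=> c x y [Hx1 Hx2] [Hy1 Hy2]; split; first by rewrite memvD ?memvZ.
    by rewrite linearP (hom_lin Hh) Hx2 Hy2 scaler0 addr0.
  pose M' := pvs PM0 PML.
  have vsM : forall x a, x \in M -> vsproj M (fact x a) = fact (vsproj M x : SubM HM) a.
    by move=> x a Hx; apply: subvs_inj; rewrite /= (vsval_sact HM) !vsprojK ?HM.
  have HM' : forall x a, x \in M' -> fact x a \in M'.
    move=> x a /(pvsP PM0 PML) [Hx1 Hx2]; apply/(pvsP PM0 PML); split; first exact: (HM _ _ Hx1).
    by rewrite vsM // (hom_fact Hh) Hx2 mfact0.
  have M'M : forall x, x \in M' -> x \in M by move=> x /(pvsP PM0 PML) [].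
  pose PZ := fun y : QuoM HM' => vsval y \in M.
  have PZ0 : PZ 0 by rewrite /PZ linear0 mem0v.
  have PZL : forall c x y, PZ x -> PZ y -> PZ (c *: x + y).
    by move=> c x y Hx Hy; rewrite /PZ linearP memvD ?memvZ.
  pose Z := pvs PZ0 PZL.
  have HZ : forall y a, y \in Z -> fact y a \in Z.
    move=> y a /(pvsP PZ0 PZL) Hy; apply/(pvsP PZ0 PZL).
    rewrite /PZ /= /qact qpr_val memvB ?HM //; apply: M'M; exact: memv_proj.
  pose j := fun z : SubM HZ => h (vsproj M (vsval (vsval z))).
  have Hw : forall z : SubM HZ, vsval (vsval z) \in M by move=> z; apply/(pvsP PZ0 PZL); exact: subvsP.
  have Hj : is_hom j.
    split => [c x y|z a]; first by rewrite /j !linearP /= (hom_lin Hh).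
    rewrite /j /= (vsval_sact HZ) /= /qact qpr_val linearB (homB Hh).
    have -> : h (vsproj M (projv M' (fact (vsval (vsval z)) a))) = 0.
      by have /(pvsP PM0 PML) [] := memv_proj M' (fact (vsval (vsval z)) a).
    rewrite subr0 -(hom_fact Hh) -vsM ?Hw //.
  have FZ : F (SubM HZ).
    apply: (HF.1 K' (SubM HZ) j (HKg HK'') Hj); apply: inj_of_ker => // z jz.
    have Hw' : vsval (vsval z) \in M' by apply/(pvsP PM0 PML); split; [exact: Hw | exact: jz].
    have : vsval (vsval z) \in (M' :&: M'^C)%VS by rewrite memv_cap Hw' subvsP.
    rewrite capv_compl memv0 => /eqP z0; apply: subvs_inj; apply: subvs_inj.
    by rewrite z0 !linear0.
  pose p := fun y : QuoM HM' => (qpr M (vsval y) : QuoM HM).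
  have pq : forall x, qpr M (vsval (qpr M' x)) = qpr M x.
    move=> x; apply/qpr_eq; rewrite qpr_val addrAC subrr add0r memvN.
    apply: M'M; exact: memv_proj.
  have FQ' : F (QuoM HM').
    apply: (HF.2 (SubM HZ) (QuoM HM') (QuoM HM) vsval p _ FZ FM); split.
    - exact: vsval_hom.
    - split => [c x y|y a]; first by rewrite /p linearP qpr_lin.
      by rewrite /p /= /qact pq qpr_fact.
    - exact: subvs_inj.
    - by move=> y; exists (qpr M' (vsval y)); rewrite /p pq qpr_vsval.
    - move=> y; split => [py|[z <-]].
        exists (vsproj Z y); rewrite vsprojK //; apply/(pvsP PZ0 PZL).
        exact: (iffLR (qpr_eq0 M _) py).
      by apply/(qpr_eq0 M _); exact: Hw.
  have Hle := Mmin M' (ex_intro _ HM' FQ').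
  have Hsub : (M' <= M)%VS by apply/subvP.
  have Hneq : M' != M.
    apply/eqP => EM; apply: hne.
    have Hx0 : vsval m0 \in M' by rewrite EM subvsP.
    by move: Hx0 => /(pvsP PM0 PML) []; rewrite vsvalK.
  by move: Hle; rewrite leqNgt (ltn_leqif (dimv_leqif_eq Hsub)) Hneq.
have HZ := TbarI TS HK (vsval_hom HM).
apply: (HF.1 (QuoM HM) K (qpr M) FM (qpr_hom HM)).
apply: (inj_of_ker (qpr_hom HM)) => x /(qpr_eq0 M _) Hx.
by rewrite -(vsprojK Hx) HZ.
Qed.
End FfProof.


Unset Implicit Arguments.
Set Strict Implicit.
Local Close Scope ring_scope.

Theorem proposition3p9 (k : closedFieldType) (A : falgType k)
    (P0 P1 : fmod A) (f g : P1 -> P0) :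
  projective P0 -> projective P1 -> is_hom f -> is_hom g ->
  zariski_closure (aut_orbit f) g ->
  [/\ (forall X, Tf f X -> Tf g X),
      (forall X, Ff f X -> Ff g X),
      (forall X, Tbarf g X -> Tbarf f X),
      (forall X, Fbarf g X -> Fbarf f X) &
      (forall X, Wf g X -> Wf f X)].
Proof.
move=> _ _ Hf Hg Hcl.
have FI := Fbar_incl Hf Hg Hcl.
have TI := Tbar_incl Hf Hg Hcl.
split.
- move=> X HX T HT HCg; apply: HX => // C HC; exact: (cok_in_T Hg FI HT HCg HC).
- move=> X HX F HF HKg; apply: HX => // K HK; exact: (Knu_in_F Hg TI HF HKg HK).
- exact: TI.
- exact: FI.
- by move=> X [H1 H2]; split; [exact: TI | exact: FI].
Qed.
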